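(* Let $k,m\in\mathbb{N}$ with $m<k\le 2m$, $k$ even, and $\gcd(2k+1,2(2m+1))=1$. Let $J_\mu=\{1,\dots,\mu\}$ and define $I_{11}=\{s\in J_m: s=\frac{2n(2m+1)+k-m}{2k+1}\text{ for some }n\in J_{k/2}\}$, $I_{12}=\{s\in J_m: 2m+1-s=\frac{2n(2m+1)+k-m}{2k+1}\text{ for some }n\in\{k/2+1,\dots,k\}\}$, $I_{21}=\{s\in J_m: s=\frac{2n(2m+1)-(k-m)}{2k+1}\text{ for some }n\in J_{k/2}\}$, $I_{22}=\{s\in J_m: 2m+1-s=\frac{2n(2m+1)-(k-m)}{2k+1}\text{ for some }n\in\{k/2+1,\dots,k\}\}$. Then $I_{21}=\{m\}$ and $I_{11}=I_{12}=I_{22}=\emptyset$. *)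

(* Defs.v *)
From mathcomp Require Import all_boot all_order all_algebra.
Set Implicit Arguments. Unset Strict Implicit. Unset Printing Implicit Defensive.
Import Order.TTheory GRing.Theory Num.Theory.
Local Open Scope ring_scope.

Definition I11 (k m : nat) (s : nat) : Prop :=
  (1 <= s <= m)%N /\ exists n : nat, (1 <= n <= k %/ 2)%N /\
    (s%:R : rat) = ((2 * n * (2 * m + 1))%:R + k%:R - m%:R) / (2 * k + 1)%:R.

Definition I12 (k m : nat) (s : nat) : Prop :=
  (1 <= s <= m)%N /\ exists n : nat, (k %/ 2 + 1 <= n <= k)%N /\
    ((2 * m + 1)%:R - s%:R : rat) = ((2 * n * (2 * m + 1))%:R + k%:R - m%:R) / (2 * k + 1)%:R.

Definition I21 (k m : nat) (s : nat) : Prop :=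
  (1 <= s <= m)%N /\ exists n : nat, (1 <= n <= k %/ 2)%N /\
    (s%:R : rat) = ((2 * n * (2 * m + 1))%:R - (k%:R - m%:R)) / (2 * k + 1)%:R.

Definition I22 (k m : nat) (s : nat) : Prop :=
  (1 <= s <= m)%N /\ exists n : nat, (k %/ 2 + 1 <= n <= k)%N /\
    ((2 * m + 1)%:R - s%:R : rat) = ((2 * n * (2 * m + 1))%:R - (k%:R - m%:R)) / (2 * k + 1)%:R.

(* Main.v *)
Require Import Defs.
From mathcomp Require Import all_boot all_order all_algebra.
From mathcomp Require Import zify.
Import Order.TTheory GRing.Theory Num.Theory.
Local Open Scope ring_scope.

Lemma ratnat (x y K : nat) : (0 < K)%N ->
  (x%:R : rat) = (y%:R) / K%:R -> (x * K = y)%N.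
Proof.
move=> K0 E; apply/eqP; rewrite -(eqr_nat rat) natrM E divfK //.
by rewrite pnatr_eq0 -lt0n.
Qed.

Lemma gauss_aux (K M x y : nat) : coprime K (2 * M) ->
  (x * (2 * M) = y * K)%N -> (K %| x)%N.
Proof.
move=> co E; rewrite -(Gauss_dvdl _ co) E; exact: dvdn_mull.
Qed.

Lemma fin_aux (K x : nat) : (K %| x)%N -> (0 < x)%N -> (x < K)%N -> False.
Proof. by move=> /dvdn_leq H /H; rewrite leqNgt => /negP. Qed.

Theorem lemma3p11 (k m : nat) :
  (m < k)%N -> (k <= 2 * m)%N -> ~~ odd k -> gcdn (2 * k + 1) (2 * (2 * m + 1)) = 1%N ->
  (forall s : nat, I21 k m s <-> s = m) /\
  (forall s : nat, ~ I11 k m s) /\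
  (forall s : nat, ~ I12 k m s) /\
  (forall s : nat, ~ I22 k m s).
Proof.
move=> mk km ek g.
have co : coprime (2 * k + 1) (2 * (2 * m + 1)) by rewrite /coprime g.
have kj : k = (2 * (k %/ 2))%N.
  by rewrite {1}(divn_eq k 2) modn2 (negbTE ek) addn0 mulnC.
set j := (k %/ 2)%N in kj.
have K0 : (0 < 2 * k + 1)%N by rewrite addn1.
split; [move=> s; split|split; [|split]].
- case=> /andP[s1 sm] [n [/andP[n1 nj]]].
  rewrite -natrB; last by lia.
  rewrite -natrB; last by nia.
  move/(@ratnat _ _ _ K0) => E.
  rewrite -/j in nj; clearbody j.
  have [t jt] : exists t, j = (n + t)%N by exists (j - n)%N; lia.
  have [u mu] : exists u, m = (s + u)%N by exists (m - s)%N; lia.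
  have H : (t * (2 * (2 * m + 1)) = u * (2 * k + 1))%N.
    rewrite kj jt mu in E *; nia.
  have := @gauss_aux _ _ _ _ co H.
  case: (posnP t) => [t0 _|tp /(dvdn_leq tp) Kt]; last by lia.
  rewrite t0 mul0n in H; nia.
- move=> ->; rewrite /I21; split; first by apply/andP; split; lia.
  exists j; split; first by apply/andP; split; lia.
  rewrite -natrB; last by lia.
  rewrite -natrB; last by nia.
  apply: (canRL (mulfK _)); first by rewrite pnatr_eq0 -lt0n.
  rewrite -natrM; congr (_%:R); rewrite kj; nia.
- move=> s [/andP[s1 sm] [n [/andP[n1 nj]]]].
  rewrite -natrD -natrB; last by lia.
  move/(@ratnat _ _ _ K0) => E.
  rewrite -/j in nj; clearbody j.
  have H : ((n + j) * (2 * (2 * m + 1)) = (s + m) * (2 * k + 1))%N.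
    rewrite kj in E *; nia.
  apply: (@fin_aux _ _ (@gauss_aux _ _ _ _ co H)); lia.
- move=> s [/andP[s1 sm] [n [/andP[n1 nj]]]].
  rewrite -natrB; last by lia.
  rewrite -natrD -natrB; last by lia.
  move/(@ratnat _ _ _ K0) => E.
  rewrite -/j in n1; clearbody j.
  have [u mu] : exists u, (2 * m + 1 = s + u)%N by exists (2 * m + 1 - s)%N; lia.
  rewrite mu addKn in E.
  have H : ((n + j) * (2 * (2 * m + 1)) = (u + m) * (2 * k + 1))%N.
    rewrite kj in E *; nia.
  apply: (@fin_aux _ _ (@gauss_aux _ _ _ _ co H)); lia.
- move=> s [/andP[s1 sm] [n [/andP[n1 nj]]]].
  rewrite -natrB; last by lia.
  rewrite -natrB; last by lia.
  rewrite -natrB; last by nia.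
  move/(@ratnat _ _ _ K0) => E.
  rewrite -/j in n1; clearbody j.
  have [u mu] : exists u, (2 * m + 1 = s + u)%N by exists (2 * m + 1 - s)%N; lia.
  rewrite mu addKn in E.
  have [t nt] : exists t, (n = j + t)%N by exists (n - j)%N; lia.
  have [v uv] : exists v, (u = m + v)%N by exists (u - m)%N; lia.
  have H : (t * (2 * (2 * m + 1)) = v * (2 * k + 1))%N.
    rewrite kj nt uv in E *; nia.
  apply: (@fin_aux _ _ (@gauss_aux _ _ _ _ co H)); lia.
Qed.
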